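(* Let $\rho\in(0,1)\cup(1,\infty)$, $\xi\in\mathbb{R}$, and $H=\frac{1}{2(1+\rho\sinh^2\chi)}\big(\cosh^2\chi P_\chi^2+\frac{P_\phi^2}{\tanh^2\chi}+\xi\sinh^2\chi\big)$ on $(\chi,\phi)\in(0,\infty)\times\mathbb{S}^1$. Suppose the level set $H=E$, $P_\phi=L>0$ is nonempty, and set $\sigma=2(\rho-1)E-\xi$. Then $\sigma\le0\Rightarrow E>0$, and $\xi-2\rho E\ge0\Rightarrow E>0$. *)

(* Defs.v *)
From Stdlib Require Import Reals.
Open Scope R_scope.

(* The Hamiltonian H(chi, phi, P_chi, P_phi); it does not depend on phi
   (phi in S^1 is represented by a real angle). *)
Definition Ham (rho xi : R) (chi phi Pchi Pphi : R) : R :=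
  / (2 * (1 + rho * (sinh chi) ^ 2)) *
  ((cosh chi) ^ 2 * Pchi ^ 2 + Pphi ^ 2 / (tanh chi) ^ 2 + xi * (sinh chi) ^ 2).

(* Main.v *)
Require Import Defs.
From Stdlib Require Import Reals Lra Psatz.
Open Scope R_scope.

Theorem lemma11 (rho xi E L : R)
  (hrho : 0 < rho) (hrho1 : rho <> 1) (hL : 0 < L)
  (hne : exists chi phi Pchi : R, 0 < chi /\ Ham rho xi chi phi Pchi L = E) :
  (2 * (rho - 1) * E - xi <= 0 -> 0 < E) /\ (xi - 2 * rho * E >= 0 -> 0 < E).
Proof.
  destruct hne as [chi [phi [P [hchi hE]]]].
  unfold Ham in hE.
  assert (hsh : 0 < sinh chi).
  { unfold sinh. assert (exp (- chi) < exp chi) by (apply exp_increasing; lra). lra. }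
  assert (hch : 0 < cosh chi).
  { unfold cosh. pose proof (exp_pos chi). pose proof (exp_pos (-chi)). lra. }
  assert (ht : 0 < tanh chi) by (unfold tanh; apply Rdiv_lt_0_compat; lra).
  set (s := sinh chi ^ 2) in *.
  assert (hs : 0 < s) by (unfold s; nra).
  set (A := cosh chi ^ 2 * P ^ 2 + L ^ 2 / tanh chi ^ 2).
  assert (hA : 0 < A).
  { unfold A. assert (0 <= cosh chi ^ 2 * P ^ 2) by nra.
    assert (0 < L ^ 2 / tanh chi ^ 2) by (apply Rdiv_lt_0_compat; nra). lra. }
  assert (hD : 0 < 2 * (1 + rho * s)) by nra.
  assert (hEq : E * (2 * (1 + rho * s)) = A + xi * s).
  { rewrite <- hE. unfold A. field. lra. }
  split; intro h; nra.
Qed.
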